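(* Let $B$ be a commutative ring with identity and $A$ a subring of $B$ containing the identity of $B$. Let $i^*:\operatorname{spec} B\to \operatorname{spec} A$ be the map $i^*(P)=P\cap A$. Then $A$ is a dense subring of $B$ if and only if $i^*$ is one-one and open, where ''open'' means: for every open set $U$ of $\operatorname{spec} B$, the set $i^*(U)$ is open in the subspace $i^*(\operatorname{spec} B)$ of $\operatorname{spec} A$.
   Context: All rings are commutative with identity; subrings contain the identity of the larger ring. $\operatorname{spec} R$ denotes the set of prime ideals of $R$ with the Zariski topology. A subring $A$ of a ring $B$ is called a dense subring of $B$ if for every ideal $I$ of $B$ and every $b\in B$ with $b\notin \operatorname{rad}(I)$, there exists $a\in B$ with $a\notin \operatorname{rad}(I)$ such that $ab\in A$. Here $\operatorname{rad}(I)$ is the radical of $I$ in $B$. *)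

(* Defs.v *)
From HB Require Import structures.
From mathcomp Require Import all_boot all_algebra.
Set Implicit Arguments. Unset Strict Implicit. Unset Printing Implicit Defensive.
Import GRing.Theory.
Local Open Scope ring_scope.

Definition is_ideal (R : comPzRingType) (I : R -> Prop) : Prop :=
  [/\ I 0, (forall x y, I x -> I y -> I (x + y)) & (forall r x, I x -> I (r * x))].

Definition is_prime_ideal (R : comPzRingType) (P : R -> Prop) : Prop :=
  [/\ is_ideal P, ~ P 1 & (forall x y, P (x * y) -> P x \/ P y)].

Definition rad (R : comPzRingType) (I : R -> Prop) : R -> Prop :=
  fun x => exists n : nat, I (x ^+ n).

(* A "subset of spec R" is a predicate on subsets of R; only its values
   on prime ideals matter. *)
Definition zariski_open (R : comPzRingType) (U : (R -> Prop) -> Prop) : Prop :=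
  exists S : R -> Prop, forall P, is_prime_ideal P ->
    (U P <-> exists s, S s /\ ~ P s).

Definition contract (A B : comPzRingType) (i : A -> B) (P : B -> Prop) : A -> Prop :=
  fun a => P (i a).

Definition spec_image (A B : comPzRingType) (i : A -> B)
    (U : (B -> Prop) -> Prop) : (A -> Prop) -> Prop :=
  fun Q => exists P, [/\ is_prime_ideal P, U P & forall a, Q a <-> contract i P a].

Definition spec_map_injective (A B : comPzRingType) (i : A -> B) : Prop :=
  forall P1 P2 : B -> Prop, is_prime_ideal P1 -> is_prime_ideal P2 ->
    (forall a, contract i P1 a <-> contract i P2 a) -> (forall x, P1 x <-> P2 x).

Definition open_in_subspace (A : comPzRingType) (Y W : (A -> Prop) -> Prop) : Prop :=
  exists O, zariski_open O /\
    (forall Q, is_prime_ideal Q -> (W Q <-> O Q /\ Y Q)).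

Definition spec_map_open (A B : comPzRingType) (i : A -> B) : Prop :=
  forall U, zariski_open U ->
    open_in_subspace (spec_image i (fun _ => True)) (spec_image i U).

Definition dense_subring (A B : comPzRingType) (i : A -> B) : Prop :=
  forall (I : B -> Prop) (b : B), is_ideal I -> ~ rad I b ->
    exists a : B, ~ rad I a /\ exists c : A, i c = a * b.

(* Main.v *)
Require Import Defs.
From HB Require Import structures.
From mathcomp Require Import all_boot all_algebra.
From mathcomp Require Import boolp classical_sets.
From mathcomp Require Import ring.
Set Implicit Arguments. Unset Strict Implicit. Unset Printing Implicit Defensive.
Import GRing.Theory.
Local Open Scope ring_scope.

Lemma rad_prime (R : comPzRingType) (P : R -> Prop) x :
  is_prime_ideal P -> Defs.rad P x -> P x.
Proof.
move=> [PI P1 Pm] [n]; elim: n => [|n IH]; first by rewrite expr0.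
by rewrite exprS => /Pm [].
Qed.

Lemma prime_exists (R : comPzRingType) (I : R -> Prop) (s : R) :
  is_ideal I -> ~ Defs.rad I s ->
  exists P, [/\ is_prime_ideal P, (forall x, I x -> P x) & ~ P s].
Proof.
move=> [I0 ID IM] nrs.
have nIs : forall n, ~ I (s ^+ n) by move=> n Hn; apply: nrs; exists n.
pose good (X : set R) := is_ideal (fun x => X x \/ I x) /\
   forall n, ~ (X (s ^+ n) \/ I (s ^+ n)).
have [] := @Zorn_bigcup R good.
  move=> F FP Ftot.
  pose U := bigcup F (fun X : set R => X); change (good U); rewrite /good /U /bigcup /=.
  have key : forall X, F X -> forall x y, (X x \/ I x) -> (X y \/ I y) ->
      U (x + y) \/ I (x + y).
    move=> X FX x y hx hy; have [[_ XD _] _] := FP X FX.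
    case: (XD x y hx hy) => h; last by right.
    by left; exists X.
  split; first split.
  - by right.
  - move=> x y [[X FX Xx]|Ix] [[Y FY Yy]|Iy].
    + case: (Ftot X Y FX FY) => sub.
        by apply: (key Y FY); left => //; apply: sub.
      by apply: (key X FX); left => //; apply: sub.
    + by apply: (key X FX); [left|right].
    + by apply: (key Y FY); [right|left].
    + by right; apply: ID.
  - move=> r x [[X FX Xx]|Ix]; last by right; apply: IM.
    have [[_ _ XM] _] := FP X FX.
    by case: (XM r x (or_introl Xx)) => h; [left; exists X|right].
  - move=> n [[X FX Xx]|Ix]; last exact: (nIs n).
    by have [_ Xd] := FP X FX; apply: (Xd n); left.
move=> A0 [[[AI0 AID AIM] Adisj] Amax].
pose P x := A0 x \/ I x.
have nPs : forall n, ~ P (s ^+ n) by [].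
have key : forall x, ~ P x -> exists p r n, P p /\ p + r * x = s ^+ n.
  move=> x nPx; apply: contrapT => hno.
  pose J z := exists p r, P p /\ z = p + r * x.
  have JI : forall z, I z -> J z by move=> z Iz; exists z, 0; split; [right|ring].
  apply: (Amax J).
    split.
      by move=> z A0z; exists z, 0; split; [left|ring].
    move=> sub; apply: nPx; left; apply: sub; by exists 0, 1; split; [right|ring].
  split; first split.
  - by left; exists 0, 0; split; [right|ring].
  - move=> y z hy hz; left.
    have {hy} [p1 [r1 [Pp1 ->]]] : J y by case: hy => // /JI.
    have {hz} [p2 [r2 [Pp2 ->]]] : J z by case: hz => // /JI.
    exists (p1 + p2), (r1 + r2); split; [exact: AID|ring].
  - move=> r y hy; left.
    have {hy} [p1 [r1 [Pp1 ->]]] : J y by case: hy => // /JI.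
    exists (r * p1), (r * r1); split; [exact: AIM|ring].
  - move=> n hn.
    have {hn} [p1 [r1 [Pp1 E]]] : J (s ^+ n) by case: hn => // /JI.
    by apply: hno; exists p1, r1, n; rewrite -E.
exists P; split; last first.
- by move=> Ps; apply: (nPs 1%N); rewrite expr1.
- by move=> x Ix; right.
split; first by split.
- by move=> P1; apply: (nPs 0%N); rewrite expr0.
move=> x y Pxy; apply: contrapT => /not_orP [nPx nPy].
have [p1 [r1 [n1 [Pp1 E1]]]] := key x nPx.
have [p2 [r2 [n2 [Pp2 E2]]]] := key y nPy.
apply: (nPs (n1 + n2)%N); rewrite exprD -E1 -E2.
have -> : (p1 + r1 * x) * (p2 + r2 * y) =
   (p2 + r2 * y) * p1 + ((r1 * x) * p2 + (r1 * r2) * (x * y)) by ring.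
apply: (AID); first exact: (AIM).
by apply: (AID); apply: (AIM).
Qed.

Lemma contract_prime (A B : comPzRingType) (i : {rmorphism A -> B}) (P : B -> Prop) :
  is_prime_ideal P -> is_prime_ideal (contract i P).
Proof.
move=> [[P0 PD PM] P1 Pm]; rewrite /contract; split; first split.
- by rewrite rmorph0.
- by move=> x y hx hy; rewrite rmorphD; apply: PD.
- by move=> r x hx; rewrite rmorphM; apply: PM.
- by rewrite rmorph1.
- by move=> x y; rewrite rmorphM; apply: Pm.
Qed.

Lemma inj_half (A B : comPzRingType) (i : {rmorphism A -> B}) :
  dense_subring i -> forall P1 P2 : B -> Prop, is_prime_ideal P1 -> is_prime_ideal P2 ->
    (forall a, contract i P1 a <-> contract i P2 a) -> forall x, P1 x -> P2 x.
Proof.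
move=> dense P1 P2 pP1 pP2 hc x P1x; apply: contrapT => nP2x.
have [[_ _ P1M] _ _] := pP1.
have [_ _ P2m] := pP2.
have [a [nra [c Hc]]] := dense P2 x (let: And3 h _ _ := pP2 in h)
   (fun h => nP2x (rad_prime pP2 h)).
have : contract i P1 c by rewrite /contract Hc; apply: P1M.
move=> /hc; rewrite /contract Hc => /P2m [P2a|//].
by apply: nra; exists 1%N; rewrite expr1.
Qed.

Theorem theorem4p1 (A B : comPzRingType) (i : {rmorphism A -> B}) :
  injective i ->
  (dense_subring i <-> spec_map_injective i /\ spec_map_open i).
Proof.
move=> _; split.
  move=> dense; split.
    move=> P1 P2 pP1 pP2 hc x; split; first exact: (inj_half dense pP1 pP2 hc).
    by apply: (inj_half dense pP2 pP1) => a; split => /hc.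
  move=> U [S HS].
  pose T (c : A) := forall P, is_prime_ideal P -> ~ P (i c) -> U P.
  exists (fun Q => exists c, T c /\ ~ Q c); split; first by exists T.
  move=> Q pQ; split.
    move=> [P [pP UP HQ]].
    have [s [Ss nPs]] := (HS P pP).1 UP.
    have [[_ _ PM] _ Pm] := pP.
    have [a [nra [c Hc]]] := dense P s (let: And3 h _ _ := pP in h)
       (fun h => nPs (rad_prime pP h)).
    have nPc : ~ P (i c).
      rewrite Hc => /Pm [Pa|//]; by apply: nra; exists 1%N; rewrite expr1.
    split; last by exists P.
    exists c; split; last by move=> /HQ.
    move=> P' pP' nP'c; apply/(HS P' pP'); exists s; split => // P's.
    by apply: nP'c; rewrite Hc; have [[_ _ P'M] _ _] := pP'; apply: P'M.
  move=> [[c [Tc nQc]] [P [pP _ HQ]]].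
  exists P; split => //; apply: Tc => // Pc; apply: nQc; exact/HQ.
move=> [inj op] I b Iid nrb.
have [P [pP IP nPb]] := prime_exists Iid nrb.
have zb : zariski_open (fun P : B -> Prop => ~ P b).
  exists (fun s => s = b) => P0 _; split; first by exists b.
  by move=> [s [-> h]].
have [O [[S' HS'] HO]] := op _ zb.
have pQ0 := contract_prime i pP.
have : spec_image i (fun P => ~ P b) (contract i P) by exists P; split.
move=> /(HO _ pQ0) [+ _] => /(HS' _ pQ0) [t [S't nQt]].
have rt : Defs.rad (fun x => exists r, x = r * b) (i t).
  apply: contrapT => nr.
  have Bid : is_ideal (fun x => exists r, x = r * b).
    split.
    - by exists 0; rewrite mul0r.
    - by move=> x y [r1 ->] [r2 ->]; exists (r1 + r2); rewrite mulrDl.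
    - by move=> r x [r1 ->]; exists (r * r1); rewrite mulrA.
  have [P' [pP' BP' nP't]] := prime_exists Bid nr.
  have pQ' := contract_prime i pP'.
  have : spec_image i (fun P => ~ P b) (contract i P').
    apply/(HO _ pQ'); split; last by exists P'.
    by apply/(HS' _ pQ'); exists t.
  move=> [P'' [pP'' nP''b HQ]].
  apply: nP''b; apply/(inj P' P'' pP' pP'' _ b).1.
    by move=> a; split => [/HQ|?]; last by apply/HQ.
  by apply: BP'; exists 1; rewrite mul1r.
have [n [r Hr]] := rt.
exists r; split; last by exists (t ^+ n); rewrite rmorphXn.
move=> rr; apply: nQt; rewrite /contract.
apply: (rad_prime pP); exists n; rewrite Hr.
have [[_ _ PM] _ _] := pP.
by rewrite mulrC; apply: PM; apply: (rad_prime pP); case: rr => m Im; exists m; apply: IP.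
Qed.
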